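(* Let $G$, $\Sigma_o$, a supervisor $S$ realized by $H$, secret initial states $X_{sec}\subseteq X_0$ and vulnerable events $\Sigma_v\subseteq\Sigma_o$ be given, and let $M^s$ be the simplified All Attack Structure. There exists an IS-detectable attacker (i.e., $S/G$ is IS-attackable) if and only if there exists a single attack structure $m$ of $M^s$ whose induced strategy $A_m$ is IS-detectable.
   Context: A plant is a finite automaton $G=(X,\Sigma,\delta,X_0)$ with partial transition function $\delta$ (extended to strings), initial states $X_0\subseteq X$; $\mathcal{L}(G,x_0)=\{s:\delta(x_0,s)\text{ defined}\}$, $\mathcal{L}(G)=\bigcup_{x_0\in X_0}\mathcal{L}(G,x_0)$. $\Sigma=\Sigma_o\dot\cup\Sigma_{uo}=\Sigma_c\dot\cup\Sigma_{uc}$, $P:\Sigma^*\to\Sigma_o^*$ the natural projection. A supervisor is $S:P(\mathcal{L}(G))\to\Gamma=\{\gamma\subseteq\Sigma:\Sigma_{uc}\subseteq\gamma\}$, realized by a deterministic automaton $H=(Z,\Sigma,\xi,z_0)$ with $\xi(z,\sigma)\neq z\Rightarrow\sigma\in\Sigma_o$ and $\Delta_H(\xi(z_0,s))=S(P(s))$ for $s\in\mathcal{L}(S/G)$ ($\Delta_H(z)$ = events defined at $z$). For any map $T$ from observable strings to subsets of $\Sigma$, $\mathcal{L}(T/G,x_0)$ is defined by $\epsilon\in\mathcal{L}(T/G,x_0)$ and $s\sigma\in\mathcal{L}(T/G,x_0)$ iff $s\in\mathcal{L}(T/G,x_0)$, $s\sigma\in\mathcal{L}(G,x_0)$, $\sigma\in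 T(P(s))$; $\mathcal{L}(T/G)=\bigcup_{x_0}\mathcal{L}(T/G,x_0)$. Estimates: $\mathcal{E}^C_{T/G}(\alpha)=\{\delta(x_0,s):x_0\in X_0,s\in\mathcal{L}(T/G,x_0),P(s)=\alpha\}$, $\mathcal{E}^I_{T/G}(\alpha)=\{x_0\in X_0:\exists s\in\mathcal{L}(T/G,x_0),P(s)=\alpha\}$. An attacker is a map $A:P(\mathcal{L}(G))\to\Sigma_o\cup\{\epsilon\}$ with $A(\epsilon)=\epsilon$ and, for $\alpha\sigma\in P(\mathcal{L}(G))$, $A(\alpha\sigma)=\sigma$ if $\sigma\notin\Sigma_v$, $A(\alpha\sigma)\in\Sigma_v\cup\{\epsilon\}$ if $\sigma\in\Sigma_v$. It induces $g_A(\epsilon)=\epsilon$, $g_A(\alpha\sigma)=g_A(\alpha)A(\alpha\sigma)$ and $S_A=S\circ g_A$. $A$ is stealthy along $\alpha\in P(\mathcal{L}(S_A/G))$ if $\mathcal{E}^C_{S/G}(g_A(\alpha))\neq\emptyset$. $A$ is IS-detectable if there exist $\alpha\in\Sigma_o^*$, $\sigma\in\Sigma_o$ with $\alpha\sigma\in P(\mathcal{L}(S_A/G))$ such that $A$ is stealthy along $\alpha$ and $\mathcal{E}^I_{S_A/G}(\alpha\sigma)\subseteq X_{sec}$. Operators: for $q\subseteq X$, $\gamma\subseteq\Sigma$, $\sigma\in\Sigma_o$: $\textsf{UR}_\gamma(q)=\{\delta(x,s):x\in q,s\in(\Sigma_{uo}\cap\gamma)^*\}$, $\textsf{NX}_\sigma(q)=\{\delta(x,\sigma):x\in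 q\}$, $\textsf{NX}_\epsilon(q)=q$, $\mathcal{O}(q,\gamma)=\{\sigma\in\Sigma_o\cap\gamma:\exists x\in q,\exists w\in(\Sigma_{uo}\cap\gamma)^*,\delta(x,w\sigma)\text{ defined}\}$. Augmented system: states $\tilde X\subseteq X_0\times X$, $\tilde X_0=\{(x_0,x_0)\}$, $\tilde\delta((x_0,x),\sigma)=(x_0,\delta(x,\sigma))$; $\widetilde{\textsf{UR}},\widetilde{\textsf{NX}},\mathcal{O}(\tilde q,\gamma)$ defined analogously; $I(\tilde q)=\{x_0:(x_0,x)\in\tilde q\text{ for some }x\}$. All Attack Structure (AAS): for $\sigma\in\Sigma_o$, $\hat\sigma$ is a doctored copy, $\hat\epsilon$ an erasure symbol; $\mathcal{V}(\sigma)=\{\hat\sigma':\sigma'\in\Sigma_v\}\cup\{\hat\epsilon\}$ if $\sigma\in\Sigma_v$, else $\{\hat\sigma\}$. $M=(Q,\Sigma_M,f,q_0)$, $\Sigma_M=\Sigma_o\cup\{\hat\sigma:\sigma\in\Sigma_o\}\cup\{\hat\epsilon\}$, $q_0=(X_0,\tilde X_0,z_0)$, states reachable from $q_0$, $Q=Q_e\dot\cup Q_a$: environment states $(q,\tilde q,z)$ with $q\subseteq X,\tilde q\subseteq\tilde X,z\in Z\cup\{z_{\textsf{att}}\}$ ($z_{\textsf{att}}$ new, $\Delta_H(z_{\textsf{att}})=\emptyset$); attack states $(q,\tilde q,z,\sigma)$. At $(q,\tilde q,z)$ enabled events are $\mathcal{O}(\tilde q,\Delta_H(z))$ if $z\in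 Z$, none if $z=z_{\textsf{att}}$, with $f((q,\tilde q,z),\sigma)=(q,\tilde q,z,\sigma)$. At $(q,\tilde q,z,\sigma)$ enabled events are $\mathcal{V}(\sigma)$, with $f((q,\tilde q,z,\sigma),\hat\sigma_a)=(q',\tilde q',z')$, $q'=\textsf{NX}_{\sigma_a}(\textsf{UR}_{\Delta_H(z)}(q))$, $\tilde q'=\widetilde{\textsf{NX}}_\sigma(\widetilde{\textsf{UR}}_{\Delta_H(z)}(\tilde q))$, $z'=\xi(z,\sigma_a)$ if $q'\ne\emptyset$ (with $\xi(z,\epsilon)=z$), $z'=z_{\textsf{att}}$ otherwise. Extended strings are those leading from $q_0$ to an environment state; for $h=\sigma_1\hat\sigma_{a1}\cdots\sigma_n\hat\sigma_{an}$, $\textsf{obs}(h)=\sigma_1\cdots\sigma_n$. Environment state $(q,\tilde q,z)$ is positive detected if $I(\tilde q)\subseteq X_{sec}$, negative detected if $I(\tilde q)\cap X_{sec}=\emptyset$ (together: $Q_{det}$); it is undetectable (set $Q_{ud}$) if $I(\tilde q)\cap X_{sec}\neq\emptyset$ and for every $(x_0,x)\in\widetilde{\textsf{UR}}_{\Delta_H(z)}(\tilde q)$ with $x_0\in X_{sec}$ there exists $(x_0',x)\in\widetilde{\textsf{UR}}_{\Delta_H(z)}(\tilde q)$ with $x_0'\notin X_{sec}$. The simplified AAS $M^s$ is the part of $M$ reachable from $q_0$ after removing all outgoing transitions from states in $Q_{det}\cup Q_{ud}$. A single attack structure (SAS) of $M^s$ is a sub-automaton $m$ of $M^s$ (states reachable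 from $q_0$, transitions a subset of those of $M^s$) such that every attack state of $m$ has exactly one enabled event in $m$, and every environment state of $m$ has in $m$ all the enabled events it has in $M^s$. For an observation $\alpha$, $\textsf{obs}^{-1}_m(\alpha)$ denotes the (at most one) extended string $h$ of $m$ with $\textsf{obs}(h)=\alpha$. The induced strategy $A_m$ is: $A_m(\epsilon)=\epsilon$; for nonempty $\alpha\in P(\mathcal{L}(G))$, if $\textsf{obs}^{-1}_m(\alpha)$ exists and its last event is $\hat\sigma_a$ then $A_m(\alpha)=\sigma_a$ (with $\sigma_a=\epsilon$ for $\hat\epsilon$); otherwise $A_m(\alpha)$ is the last event of $\alpha$. *)

(* Defs.v *)
From mathcomp Require Import all_boot.
Set Implicit Arguments.
Unset Strict Implicit.
Unset Printing Implicit Defensive.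

Record setup := Setup {
  s_X : finType;
  s_Sigma : finType;
  s_delta : s_X -> s_Sigma -> option s_X;
  s_X0 : {set s_X};
  s_So : {set s_Sigma};                     (* observable events; Sigma_uo = ~: So *)
  s_Suc : {set s_Sigma};
  s_Z : finType;                          (* states of H *)
  s_xi : s_Z -> s_Sigma -> option s_Z;
  s_z0 : s_Z;
  s_S : seq s_Sigma -> {set s_Sigma};         (* supervisor (values outside P(L(G)) irrelevant) *)
  s_Xsec : {set s_X};
  s_Sv : {set s_Sigma}
}.

Section Defs.
Variable D : setup.
Local Notation X := (@s_X D).
Local Notation Sigma := (@s_Sigma D).
Local Notation delta := (@s_delta D).
Local Notation X0 := (@s_X0 D).
Local Notation So := (@s_So D).
Local Notation Suc := (@s_Suc D).
Local Notation Z := (@s_Z D).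
Local Notation xi := (@s_xi D).
Local Notation z0 := (@s_z0 D).
Local Notation S := (@s_S D).
Local Notation Xsec := (@s_Xsec D).
Local Notation Sv := (@s_Sv D).

Fixpoint deltas (x : X) (s : seq Sigma) : option X :=
  match s with
  | [::] => Some x
  | a :: s' => match delta x a with Some y => deltas y s' | None => None end
  end.

Fixpoint xis (z : Z) (s : seq Sigma) : option Z :=
  match s with
  | [::] => Some z
  | a :: s' => match xi z a with Some y => xis y s' | None => None end
  end.

Definition P (s : seq Sigma) : seq Sigma := [seq a <- s | a \in So].

Definition inLG (s : seq Sigma) : Prop :=
  exists2 x0, x0 \in X0 & isSome (deltas x0 s).
Definition inPLG (al : seq Sigma) : Prop :=
  exists2 s, inLG s & P s = al.

Inductive inLT (T : seq Sigma -> {set Sigma}) (x0 : X) : seq Sigma -> Prop :=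
| LT_nil : inLT T x0 [::]
| LT_snoc s a : inLT T x0 s -> isSome (deltas x0 (rcons s a)) ->
                a \in T (P s) -> inLT T x0 (rcons s a).

Definition inLTG (T : seq Sigma -> {set Sigma}) (s : seq Sigma) : Prop :=
  exists2 x0, x0 \in X0 & inLT T x0 s.

Definition inPLTG (T : seq Sigma -> {set Sigma}) (al : seq Sigma) : Prop :=
  exists2 s, inLTG T s & P s = al.

Definition inEC (T : seq Sigma -> {set Sigma}) (al : seq Sigma) (x : X) : Prop :=
  exists2 x0, x0 \in X0 &
    exists s, [/\ inLT T x0 s, P s = al & deltas x0 s = Some x].

Definition inEI (T : seq Sigma -> {set Sigma}) (al : seq Sigma) (x0 : X) : Prop :=
  x0 \in X0 /\ exists2 s, inLT T x0 s & P s = al.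

(* Delta_H; None plays the role of z_att *)
Definition DeltaH (z : option Z) : {set Sigma} :=
  match z with
  | Some z => [set a | isSome (xi z a)]
  | None => set0
  end.

Definition wf_setup : Prop :=
  [/\ Xsec \subset X0,
      Sv \subset So,
      (* S is a supervisor: S(al) \in Gamma on P(L(G)) *)
      (forall al, inPLG al -> Suc \subset S al),
      (forall z a z', xi z a = Some z' -> z' <> z -> a \in So) &
      (forall s, inLTG S s ->
         exists2 z, xis z0 s = Some z & DeltaH (Some z) = S (P s))].

(* A : P(L(G)) -> Sigma_o U {eps}, None encoding eps *)
Definition is_attacker (A : seq Sigma -> option Sigma) : Prop :=
  A [::] = None /\
  forall al a, inPLG (rcons al a) ->
    (a \notin Sv -> A (rcons al a) = Some a) /\
    (a \in Sv -> match A (rcons al a) with Some b => b \in Sv | None => true end).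

Fixpoint gA_aux (A : seq Sigma -> option Sigma) (pre al : seq Sigma) : seq Sigma :=
  match al with
  | [::] => [::]
  | a :: al' =>
      let pre' := rcons pre a in
      match A pre' with
      | Some b => b :: gA_aux A pre' al'
      | None => gA_aux A pre' al'
      end
  end.
Definition gA (A : seq Sigma -> option Sigma) (al : seq Sigma) : seq Sigma :=
  gA_aux A [::] al.

Definition SA (A : seq Sigma -> option Sigma) : seq Sigma -> {set Sigma} :=
  fun al => S (gA A al).

Definition stealthy (A : seq Sigma -> option Sigma) (al : seq Sigma) : Prop :=
  exists x, inEC S (gA A al) x.

Definition IS_detectable (A : seq Sigma -> option Sigma) : Prop :=
  exists al a, [/\ a \in So, inPLTG (SA A) (rcons al a), stealthy A al &
    (forall x0, inEI (SA A) (rcons al a) x0 -> x0 \in Xsec)].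

Definition uo_step (gamma : {set Sigma}) : rel X :=
  fun x y => [exists a, [&& a \in gamma, a \notin So & delta x a == Some y]].

Definition UR (gamma : {set Sigma}) (q : {set X}) : {set X} :=
  [set x | [exists x' in q, connect (uo_step gamma) x' x]].
Definition NX (a : Sigma) (q : {set X}) : {set X} :=
  [set x | [exists x' in q, delta x' a == Some x]].
Definition URt (gamma : {set Sigma}) (qt : {set X * X}) : {set X * X} :=
  [set p | [exists p' in qt, (p'.1 == p.1) && connect (uo_step gamma) p'.2 p.2]].
Definition NXt (a : Sigma) (qt : {set X * X}) : {set X * X} :=
  [set p | [exists p' in qt, (p'.1 == p.1) && (delta p'.2 a == Some p.2)]].
Definition Ot (qt : {set X * X}) (gamma : {set Sigma}) : {set Sigma} :=
  [set a | [&& a \in So, a \in gamma &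
     [exists p in qt, exists x, connect (uo_step gamma) p.2 x && isSome (delta x a)]]].
Definition I (qt : {set X * X}) : {set X} :=
  [set x0 | [exists x, (x0, x) \in qt]].

Inductive hatev := HSym of Sigma | HEps.
Inductive evM := EObs of Sigma | EHat of hatev.

Inductive aas_state :=
| Env of {set X} & {set X * X} & option Z
| Att of {set X} & {set X * X} & option Z & Sigma.

Definition Vset (a : Sigma) (h : hatev) : bool :=
  match h with
  | HSym b => if a \in Sv then b \in Sv else b == a
  | HEps => a \in Sv
  end.

Definition q0 : aas_state := Env X0 [set (x, x) | x in X0] (Some z0).

Definition fM (st : aas_state) (e : evM) : option aas_state :=
  match st, e with
  | Env q qt z, EObs a =>
      if a \in Ot qt (DeltaH z) then Some (Att q qt z a) else None
  | Att q qt z a, EHat h =>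
      if Vset a h then
        let gamma := DeltaH z in
        let q' := match h with
                  | HSym b => NX b (UR gamma q)
                  | HEps => UR gamma q
                  end in
        let qt' := NXt a (URt gamma qt) in
        let z' := if q' == set0 then None else
                  match z, h with
                  | Some z1, HSym b => xi z1 b   (* undefined xi : z_att *)
                  | Some z1, HEps => Some z1
                  | None, _ => None
                  end in
        Some (Env q' qt' z')
      else None
  | _, _ => None
  end.

Definition pos_det (qt : {set X * X}) : bool := I qt \subset Xsec.
Definition neg_det (qt : {set X * X}) : bool := [disjoint I qt & Xsec].
Definition undetectable (qt : {set X * X}) (z : option Z) : bool :=
  (I qt :&: Xsec != set0) &&
  [forall p in URt (DeltaH z) qt,
     (p.1 \in Xsec) ==>
       [exists x0', ((x0', p.2) \in URt (DeltaH z) qt) && (x0' \notin Xsec)]].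

Definition stopped (st : aas_state) : bool :=
  match st with
  | Env _ qt z => [|| pos_det qt, neg_det qt | undetectable qt z]
  | Att _ _ _ _ => false
  end.

(* simplified AAS M^s (its reachable part is taken below via reachability) *)
Definition fMs (st : aas_state) (e : evM) : option aas_state :=
  if stopped st then None else fM st e.

(* A sub-automaton m is given by its (partial) transition function fm;       *)
(* its states are those reachable from q0 in fm.                             *)
Inductive reach (fm : aas_state -> evM -> option aas_state) : aas_state -> Prop :=
| reach0 : reach fm q0
| reachS st e st' : reach fm st -> fm st e = Some st' -> reach fm st'.

Definition is_SAS (fm : aas_state -> evM -> option aas_state) : Prop :=
  forall st, reach fm st ->
    (forall e st', fm st e = Some st' -> fMs st e = Some st') /\
    match st with
    | Env _ _ _ => forall e, isSome (fMs st e) -> isSome (fm st e)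
    | Att _ _ _ _ => exists! e, isSome (fm st e)
    end.

(* extended strings h = sigma_1 hat_1 ... sigma_n hat_n of m, as pairs *)
Inductive ext_run (fm : aas_state -> evM -> option aas_state) :
    aas_state -> seq (Sigma * hatev) -> aas_state -> Prop :=
| er_nil st : ext_run fm st [::] st
| er_cons st sa st2 st3 a h hs :
    fm st (EObs a) = Some sa -> fm sa (EHat h) = Some st2 ->
    ext_run fm st2 hs st3 -> ext_run fm st ((a, h) :: hs) st3.

Definition hat_to_opt (h : hatev) : option Sigma :=
  match h with HSym b => Some b | HEps => None end.

Definition induced_strategy (fm : aas_state -> evM -> option aas_state)
    (A : seq Sigma -> option Sigma) : Prop :=
  A [::] = None /\
  forall al a, inPLG (rcons al a) ->
    (forall hs st, ext_run fm q0 hs st -> map fst hs = rcons al a ->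
        A (rcons al a) = hat_to_opt (last (a, HEps) hs).2) /\
    ((forall hs st, ext_run fm q0 hs st -> map fst hs <> rcons al a) ->
        A (rcons al a) = Some a).

End Defs.

(* Main.v *)
Require Import Defs.
From mathcomp Require Import all_boot.
From Stdlib Require Import Classical ClassicalEpsilon.
From mathcomp Require Import zify.
Set Implicit Arguments.
Unset Strict Implicit.
Unset Printing Implicit Defensive.

Section Proof.
Variable D : setup.
Local Notation X := (@s_X D).
Local Notation Sigma := (@s_Sigma D).
Local Notation delta := (@s_delta D).
Local Notation X0 := (@s_X0 D).
Local Notation So := (@s_So D).
Local Notation Z := (@s_Z D).
Local Notation xi := (@s_xi D).
Local Notation z0 := (@s_z0 D).
Local Notation S := (@s_S D).
Local Notation Xsec := (@s_Xsec D).
Local Notation Sv := (@s_Sv D).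

Lemma deltas_cat x s t : @deltas D x (s ++ t) =
  match deltas x s with Some y => deltas y t | None => None end.
Proof.
elim: s x => [|a s IH] x //=.
case: (delta x a) => [y|] //.
Qed.

Lemma deltas_rcons x s a : @deltas D x (rcons s a) =
  match deltas x s with Some y => delta y a | None => None end.
Proof.
rewrite -cats1 deltas_cat; case: (deltas x s) => // y /=.
by case: (delta y a).
Qed.

Lemma inLT_inv T x0 s a : @inLT D T x0 (rcons s a) ->
  [/\ inLT T x0 s, isSome (deltas x0 (rcons s a)) & a \in T (P s)].
Proof.
move=> H; inversion H as [Hn|s' a' H1 H2 H3 Heq].
- by case: s H Hn => [|? ?] //.
- move/rcons_inj: Heq => [-> ->] in H1 H2 H3 *; by split.
Qed.

Lemma inLT_prefix T x0 s t : @inLT D T x0 (s ++ t) -> inLT T x0 s.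
Proof.
elim/last_ind: t => [|t a IH]; first by rewrite cats0.
by rewrite -rcons_cat => /inLT_inv [/IH].
Qed.

Lemma inLT_def T x0 s : @inLT D T x0 s -> isSome (deltas x0 s).
Proof. by case. Qed.

Lemma P_cat s t : @P D (s ++ t) = P s ++ P t.
Proof. by rewrite /P filter_cat. Qed.

Lemma P_rcons s a : @P D (rcons s a) = if a \in So then rcons (P s) a else P s.
Proof. by rewrite /P filter_rcons. Qed.

Definition unobs (u : seq Sigma) := all (fun a => a \notin So) u.

Lemma P_unobs u : unobs u -> @P D u = [::].
Proof.
elim: u => [|a u IH] //=; rewrite /unobs /= => /andP [Ha Hu].
by rewrite /P /= (negbTE Ha); exact: IH.
Qed.

Lemma P_nil_unobs u : @P D u = [::] -> unobs u.
Proof.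
elim: u => [|a u IH] //=; rewrite /P /=; case: ifP => // Ha /IH Hu.
Qed.

Lemma inLT_ext T x0 s x u y : @inLT D T x0 s -> deltas x0 s = Some x ->
  deltas x u = Some y -> all (fun a => (a \notin So) && (a \in T (P s))) u ->
  inLT T x0 (s ++ u).
Proof.
move=> Hs Hx; elim/last_ind: u y => [|u a IH] y; first by rewrite cats0.
rewrite deltas_rcons all_rcons => Hy /andP [/andP [Ha1 Ha2] Hu].
case Hd: (deltas x u) Hy => [w|//] Hw.
rewrite -rcons_cat; apply: LT_snoc; first exact: (IH w).
  by rewrite deltas_rcons deltas_cat Hx Hd Hw.
have Hu' : unobs u by apply/allP => b /(allP Hu) /andP [].
by rewrite P_cat (P_unobs Hu') cats0.
Qed.

Lemma inLT_unobs_inv T x0 s u : @inLT D T x0 (s ++ u) -> unobs u ->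
  all (fun a => a \in T (P s)) u.
Proof.
elim/last_ind: u => [|u a IH] //.
rewrite -rcons_cat /unobs all_rcons => /inLT_inv [H1 _ H3] /andP [Ha Hu].
rewrite all_rcons (IH H1 Hu) andbT.
by rewrite P_cat (P_unobs Hu) cats0 in H3.
Qed.

Definition lastobs (s : seq Sigma) : Prop :=
  s = [::] \/ exists t a, s = rcons t a /\ a \in So.

Lemma decomp s : exists t u, [/\ s = t ++ u, lastobs t & unobs u].
Proof.
elim/last_ind: s => [|s a [t [u [-> Ht Hu]]]].
  by exists [::], [::]; split => //; left.
case Ha: (a \in So).
  exists (rcons (t ++ u) a), [::]; split; first by rewrite cats0.
    by right; exists (t ++ u), a.
  done.
exists t, (rcons u a); split => //; first by rewrite rcons_cat.
by rewrite /unobs all_rcons Ha.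
Qed.

Lemma lastobs_nil t : lastobs t -> @P D t = [::] -> t = [::].
Proof.
case=> // [[t' [a [-> Ha]]]]; rewrite P_rcons Ha.
by case: (P t').
Qed.

Lemma lastobs_rcons t be a : lastobs t -> @P D t = rcons be a ->
  exists t', [/\ t = rcons t' a, P t' = be & a \in So].
Proof.
case=> [->|[t' [a' [-> Ha]]]]; first by rewrite /P /=; case: be.
rewrite P_rcons Ha => /rcons_inj [<- <-]; by exists t'.
Qed.

Lemma P_split s be r : @P D s = be ++ r ->
  exists s1 s2, [/\ s = s1 ++ s2, P s1 = be & P s2 = r].
Proof.
elim: s be => [|a s IH] be.
  by case: be => // H; exists [::], [::]; split.
rewrite /P /=; case: ifP => Ha.
  case: be => [|b be] /=.
    move=> H; exists [::], (a :: s); split => //.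
    by rewrite /P /= Ha.
  case=> <- /IH [s1 [s2 [-> H1 H2]]].
  by exists (a :: s1), s2; split => //; rewrite -H1 /P /= Ha.
move/IH => [s1 [s2 [-> H1 H2]]].
by exists (a :: s1), s2; split => //; rewrite -H1 /P /= Ha.
Qed.

Lemma splice T x0 x0' t v s' : @inLT D T x0 (t ++ v) -> inLT T x0' s' ->
  P s' = P t -> deltas x0' s' = deltas x0 t -> inLT T x0' (s' ++ v).
Proof.
move=> + Hs' HP Hd; elim/last_ind: v => [|v a IH]; first by rewrite !cats0.
rewrite -!rcons_cat => /inLT_inv [H1 H2 H3].
apply: LT_snoc; first exact: IH.
  by move: H2; rewrite !deltas_rcons !deltas_cat Hd.
by rewrite P_cat HP -P_cat.
Qed.


Lemma connect_uo (g : {set Sigma}) x y :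
  connect (@uo_step D g) x y <->
  exists u, all (fun a => (a \notin So) && (a \in g)) u /\ deltas x u = Some y.
Proof.
split.
  move/connectP => [p Hp ->] {y}.
  elim: p x Hp => [|z p IH] x /=; first by move=> _; exists [::].
  move=> /andP [/existsP [a /and3P [Ha1 Ha2 /eqP Ha3]] Hp].
  have [u [Hu1 Hu2]] := IH _ Hp.
  by exists (a :: u); rewrite /= Ha1 Ha2 Hu1 Ha3.
move=> [u []]; elim: u x => [|a u IH] x /=; first by move=> _ [->].
move=> /andP [/andP [Ha1 Ha2] Hu].
case Hd: (delta x a) => [z|//] Hz.
apply: connect_trans (IH z Hu Hz).
apply: connect1; apply/existsP; exists a; by rewrite Ha1 Ha2 Hd /=.
Qed.

Lemma xis_rcons z s a : @xis D z (rcons s a) =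
  match xis z s with Some y => xi y a | None => None end.
Proof.
elim: s z => [|b s IH] z /=; first by case: (xi z a).
by case: (xi z b).
Qed.

Lemma xis_P (Hxi : forall z a z', xi z a = Some z' -> z' <> z -> a \in So) z s z' :
  @xis D z s = Some z' -> xis z (P s) = Some z'.
Proof.
elim: s z => [|a s IH] z //=.
case Hz: (xi z a) => [y|//] Hy.
rewrite /P /=; case: ifP => Ha /=.
  by rewrite Hz; apply: IH.
have Eyz : y = z.
  case: (eqVneq y z) => // Hne.
  by have := Hxi _ _ _ Hz (elimN eqP Hne); rewrite Ha.
by subst y; apply: IH.
Qed.

Definition optl (o : option Sigma) : seq Sigma :=
  match o with Some b => [:: b] | None => [::] end.

Lemma gA_aux_rcons B pre al a : @gA_aux D B pre (rcons al a) =
  gA_aux B pre al ++ optl (B (pre ++ rcons al a)).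
Proof.
elim: al pre => [|x al IH] pre /=.
  by rewrite cats1; case: (B (rcons pre a)).
by rewrite IH cat_rcons; case: (B (rcons pre x)).
Qed.

Lemma gA_rcons B al a : @gA D B (rcons al a) = gA B al ++ optl (B (rcons al a)).
Proof. exact: gA_aux_rcons. Qed.

Lemma gA_nil B : @gA D B [::] = [::].
Proof. by []. Qed.

Lemma gA_prefix B al r : exists w, @gA D B (al ++ r) = gA B al ++ w.
Proof.
elim/last_ind: r => [|r a [w Hw]]; first by exists [::]; rewrite !cats0.
by exists (w ++ optl (B (rcons (al ++ r) a))); rewrite -rcons_cat gA_rcons Hw catA.
Qed.

Definition Reach T be x0 x := exists s,
  [/\ @inLT D T x0 s, P s = be & deltas x0 s = Some x].
Definition ReachL T be x0 x := exists s,
  [/\ @inLT D T x0 s, P s = be, deltas x0 s = Some x & lastobs s].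

Lemma ReachL_Reach T be x0 x : ReachL T be x0 x -> Reach T be x0 x.
Proof. by move=> [s [H1 H2 H3 _]]; exists s. Qed.

Lemma G_ext T be x0 x y : Reach T be x0 x -> connect (uo_step (T be)) x y ->
  Reach T be x0 y.
Proof.
move=> [s [H1 H2 H3]] /connect_uo [u [Hu1 Hu2]].
exists (s ++ u); split.
- apply: inLT_ext H1 H3 Hu2 _; by rewrite H2.
- have Hu : unobs u by apply/allP => a /(allP Hu1) /andP [].
  by rewrite P_cat (P_unobs Hu) cats0.
- by rewrite deltas_cat H3.
Qed.

Lemma G_dec T be x0 y : Reach T be x0 y ->
  exists x, ReachL T be x0 x /\ connect (uo_step (T be)) x y.
Proof.
move=> [s [H1 H2 H3]]; have [t [u [Es Ht Hu]]] := decomp s; subst s.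
have Ht1 := inLT_prefix H1.
have := inLT_def Ht1; case Hx: (deltas x0 t) => [x|//] _.
have HPt : P t = be by rewrite -H2 P_cat (P_unobs Hu) cats0.
exists x; split; first by exists t.
apply/connect_uo; exists u; split; last by rewrite deltas_cat Hx in H3.
have := inLT_unobs_inv H1 Hu; rewrite HPt => Hu'.
apply/allP => a Ha; by rewrite (allP Hu a Ha) (allP Hu' a Ha).
Qed.

Lemma G_obs T be x0 x a y : Reach T be x0 x -> a \in So -> a \in T be ->
  delta x a = Some y -> ReachL T (rcons be a) x0 y.
Proof.
move=> [s [H1 H2 H3]] Ha Hab Hy; exists (rcons s a); split.
- by apply: LT_snoc => //; rewrite ?deltas_rcons ?H3 ?Hy ?H2.
- by rewrite P_rcons Ha H2.
- by rewrite deltas_rcons H3.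
- by right; exists s, a.
Qed.

Lemma G_obs_inv T be x0 a y : ReachL T (rcons be a) x0 y ->
  exists x, [/\ Reach T be x0 x, delta x a = Some y, a \in T be & a \in So].
Proof.
move=> [s [H1 H2 H3 H4]]; have [t [Es Ht Ha]] := lastobs_rcons H4 H2; subst s.
have [Ht1 _ Ht3] := inLT_inv H1.
have := inLT_def Ht1; case Hx: (deltas x0 t) => [x|//] _.
exists x; split => //; first by exists t.
  by rewrite deltas_rcons Hx in H3.
by rewrite -Ht.
Qed.

Lemma ReachL_nil T x0 x : ReachL T [::] x0 x -> x = x0.
Proof.
move=> [s [H1 H2 H3 H4]]; rewrite (lastobs_nil H4 H2) in H3; by case: H3.
Qed.

Lemma ReachL_nil' T x0 : ReachL T [::] x0 x0.
Proof. exists [::]; split => //; [exact: LT_nil | by left]. Qed.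


Lemma ext_run_cat fm st hs1 hs2 st3 :
  @ext_run D fm st (hs1 ++ hs2) st3 <->
  exists st2, ext_run fm st hs1 st2 /\ ext_run fm st2 hs2 st3.
Proof.
split.
  elim: hs1 st => [|[a h] hs1 IH] st /=; first by move=> H; exists st; split => //; constructor.
  move=> H; inversion H; subst.
  have [st4 [H1 H2]] := IH _ H7.
  exists st4; split => //; by econstructor; eauto.
move=> [st2 [H1 H2]]; elim: H1 H2 => // {}st sa st4 st5 a h hs H1 H2 H3 IH H4.
by econstructor; eauto.
Qed.

Lemma ext_run_rcons fm st hs a h st3 :
  @ext_run D fm st (rcons hs (a, h)) st3 <->
  exists st2 sa, [/\ ext_run fm st hs st2, fm st2 (EObs a) = Some sa &
                     fm sa (EHat h) = Some st3].
Proof.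
rewrite -cats1 ext_run_cat; split.
  move=> [st2 [H1 H2]]; inversion H2; subst.
  inversion H8; subst; by exists st2, sa.
move=> [st2 [sa [H1 H2 H3]]]; exists st2; split => //.
by econstructor; eauto; constructor.
Qed.

Lemma ext_run_det fm st hs s1 s2 :
  @ext_run D fm st hs s1 -> ext_run fm st hs s2 -> s1 = s2.
Proof.
elim: hs st => [|[a h] hs IH] st H H'.
  inversion H; inversion H'; congruence.
inversion H as [|? sa ? ? ? ? ? E1 E2 R]; subst.
inversion H' as [|? sa' ? ? ? ? ? E1' E2' R']; subst.
have Esa : sa = sa' by congruence.
idtac.
subst sa'; have Est : st2 = st1 by congruence.
subst st1; exact: IH R R'.
Qed.

Lemma ext_run_sub (fm fm' : aas_state D -> evM D -> option (aas_state D)) st hs st' :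
  (forall s e s', fm s e = Some s' -> fm' s e = Some s') ->
  ext_run fm st hs st' -> ext_run fm' st hs st'.
Proof.
move=> Hs H; elim: H => [?|? ? ? ? ? ? ? H1 H2 _ IH]; first constructor.
econstructor; eauto.
Qed.

Lemma fMs_fM st e st' : @fMs D st e = Some st' -> fM st e = Some st'.
Proof. by rewrite /fMs; case: ifP. Qed.

Definition consistent (B : seq Sigma -> option Sigma) (hs : seq (Sigma * hatev D)) :=
  forall hs1 a h hs2, hs = hs1 ++ (a, h) :: hs2 ->
    B (rcons (map fst hs1) a) = hat_to_opt h.

Lemma consistent_rcons B hs a h :
  consistent B (rcons hs (a, h)) <->
  consistent B hs /\ B (rcons (map fst hs) a) = hat_to_opt h.
Proof.
split.
  move=> H; split; last by apply: (H hs a h [::]); rewrite cats1.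
  move=> hs1 a' h' hs2 E; apply: (H hs1 a' h' (rcons hs2 (a, h))).
  by rewrite E rcons_cat.
move=> [H1 H2] hs1 a' h' hs2; case/lastP: hs2 => [|hs2 y].
  rewrite cats1 => /rcons_inj [<- <- <-]; exact: H2.
rewrite -rcons_cons -rcons_cat => /rcons_inj [E _]; exact: H1 E.
Qed.


Hypothesis Hwf : wf_setup D.

Lemma Hxi : forall z a z', xi z a = Some z' -> z' <> z -> a \in So.
Proof. by case: Hwf. Qed.
Lemma Hreal : forall s, inLTG S s ->
  exists2 z, xis z0 s = Some z & DeltaH (Some z) = S (P s).
Proof. by case: Hwf. Qed.
Lemma HSvSo : Sv \subset So.
Proof. by case: Hwf. Qed.
Lemma HXsec : Xsec \subset X0.
Proof. by case: Hwf. Qed.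

Lemma control g z1 : (exists x, @inEC D S g x) -> xis z0 g = Some z1 ->
  DeltaH (Some z1) = S g.
Proof.
move=> [x [x0 Hx0 [s [H1 H2 H3]]]] Hz.
have [z Hz' HD] := Hreal (ex_intro2 _ _ x0 Hx0 H1).
have := xis_P Hxi Hz'; rewrite H2 Hz => [[->]]; by rewrite HD H2.
Qed.

Definition Inv (B : seq Sigma -> option Sigma) be (st : aas_state D) : Prop :=
  match st with
  | Env q qt z =>
    (forall x0 x, (x0, x) \in qt <-> x0 \in X0 /\ ReachL (SA B) be x0 x) /\
    (forall z1, z = Some z1 -> [/\ xis z0 (gA B be) = Some z1,
        exists x, inEC S (gA B be) x,
        (forall x0 x, x0 \in X0 -> ReachL S (gA B be) x0 x -> x \in q) &
        (forall x, x \in q -> inEC S (gA B be) x)])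
  | Att _ _ _ _ => False
  end.

Lemma Inv_ctl B be q qt z1 : Inv B be (Env q qt (Some z1)) ->
  DeltaH (Some z1) = SA B be.
Proof.
move=> [_ /(_ z1 erefl) [H1 H2 _ _]]; exact: control H2 H1.
Qed.

Lemma URt_char B be q qt z1 x0 x : Inv B be (Env q qt (Some z1)) ->
  (x0, x) \in URt (DeltaH (Some z1)) qt <-> x0 \in X0 /\ Reach (SA B) be x0 x.
Proof.
move=> HI; have Hc := Inv_ctl HI; case: HI => HI _.
rewrite Hc inE; split.
  move/existsP => [[x0' x''] /andP [Hp /andP [/eqP /= E Hc']]]; subst x0'.
  have [Hx0 HR] := (HI _ _).1 Hp.
  by split => //; apply: G_ext (ReachL_Reach HR) Hc'.
move=> [Hx0 /G_dec [x'' [HR Hc']]].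
apply/existsP; exists (x0, x''); rewrite /= eqxx Hc' andbT.
by rewrite andbT; apply/(HI x0 x'').
Qed.

Lemma Ot_char B be q qt z1 a : Inv B be (Env q qt (Some z1)) ->
  a \in Ot qt (DeltaH (Some z1)) <->
  [/\ a \in So, a \in SA B be &
     exists x0 x, [/\ x0 \in X0, Reach (SA B) be x0 x & isSome (delta x a)]].
Proof.
move=> HI; have Hc := Inv_ctl HI; have HI' := HI; case: HI => HI _.
rewrite inE; split.
  move/and3P => [Ha1 Ha2 /existsP [[x0 x''] /andP [Hp /existsP [x /andP [Hcx Hd]]]]].
  split => //; first by rewrite -Hc.
  have [Hx0 HR] := (HI _ _).1 Hp.
  exists x0, x; split => //; apply: G_ext (ReachL_Reach HR) _; by rewrite -Hc.
move=> [Ha1 Ha2 [x0 [x [Hx0 HR Hd]]]].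
rewrite Ha1 Hc Ha2 /=.
have [x'' [HR' Hc']] := G_dec HR.
apply/existsP; exists (x0, x''); rewrite (proj2 (HI _ _) (conj Hx0 HR')) /=.
apply/existsP; exists x; by rewrite Hc' Hd.
Qed.


Lemma NXt_char B be q qt z1 a x0 y : Inv B be (Env q qt (Some z1)) ->
  a \in Ot qt (DeltaH (Some z1)) ->
  (x0, y) \in NXt a (URt (DeltaH (Some z1)) qt) <->
  x0 \in X0 /\ ReachL (SA B) (rcons be a) x0 y.
Proof.
move=> HI HOt; have [Ha1 Ha2 _] := (Ot_char a HI).1 HOt.
rewrite inE; split.
  move/existsP => [[x0' x] /andP [Hp /andP [/eqP /= E /eqP Hd]]]; subst x0'.
  have [Hx0 HR] := (URt_char _ _ HI).1 Hp.
  by split => //; apply: G_obs HR Ha1 Ha2 Hd.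
move=> [Hx0 /G_obs_inv [x [HR Hd _ _]]].
apply/existsP; exists (x0, x); rewrite /= eqxx Hd eqxx !andbT.
by apply/(URt_char _ _ HI).
Qed.

Lemma in_UR g (q : {set X}) x :
  x \in UR g q <-> exists x', x' \in q /\ connect (@uo_step D g) x' x.
Proof.
rewrite inE; split; first by move/existsP => [x' /andP [H1 H2]]; exists x'.
by move=> [x' [H1 H2]]; apply/existsP; exists x'; rewrite H1 H2.
Qed.

Lemma in_NX b (q : {set X}) x :
  x \in NX b q <-> exists x', x' \in q /\ delta x' b = Some x.
Proof.
rewrite inE; split; first by move/existsP => [x' /andP [H1 /eqP H2]]; exists x'.
by move=> [x' [H1 H2]]; apply/existsP; exists x'; rewrite H1 H2 eqxx.
Qed.

Lemma inv_step B be q qt z1 a h st' :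
  Inv B be (Env q qt (Some z1)) -> a \in Ot qt (DeltaH (Some z1)) ->
  B (rcons be a) = hat_to_opt h ->
  fM (Att q qt (Some z1) a) (EHat h) = Some st' ->
  Inv B (rcons be a) st' /\
  ((exists x, inEC S (gA B (rcons be a)) x) ->
     exists q' qt' z1', st' = Env q' qt' (Some z1')).
Proof.
move=> HI HOt HB Hf.
have Hc : DeltaH (Some z1) = S (gA B be) := Inv_ctl HI.
have [Ha1 Ha2 _] := (Ot_char a HI).1 HOt.
have [Hxs HEC Hsub1 Hsub2] := HI.2 z1 erefl.
have HN := fun x0 y => NXt_char x0 y HI HOt.
case: h HB Hf => [b|] HB /=; case: ifP => // HV [<-].
- have Eg : gA B (rcons be a) = rcons (gA B be) b by rewrite gA_rcons HB /= cats1.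
  rewrite /Inv Eg.
  have Hb1 : b \in So.
    move: HV; case: ifP => Ha HV; first exact: (subsetP HSvSo).
    by rewrite (eqP HV).
  have F2 : forall x0 x, x0 \in X0 -> ReachL S (rcons (gA B be) b) x0 x ->
      x \in NX b (UR (DeltaH (Some z1)) q).
    move=> x0 x Hx0 /G_obs_inv [x' [HR' Hd Hb _]].
    have [x'' [HRL Hcn]] := G_dec HR'.
    apply/in_NX; exists x'; split => //; apply/in_UR; exists x''; split.
      exact: Hsub1 HRL.
    by rewrite Hc.
  have F1 : b \in S (gA B be) -> forall x, x \in NX b (UR (DeltaH (Some z1)) q) ->
      inEC S (rcons (gA B be) b) x.
    move=> Hb x /in_NX [x' [/in_UR [x'' [Hx'' Hcn]] Hd]].
    have [x0 Hx0 HR] := Hsub2 _ Hx''.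
    rewrite Hc in Hcn; have HR' := G_ext HR Hcn.
    exists x0 => //; exact: ReachL_Reach (G_obs HR' Hb1 Hb Hd).
  split.
    split; first exact: HN.
    move=> z1'; case: eqP => // Hne Hxb.
    have Hb : b \in S (gA B be) by rewrite -Hc inE Hxb.
    split.
    + by rewrite xis_rcons Hxs.
    + have /set0Pn [x Hx] : NX b (UR (DeltaH (Some z1)) q) != set0 by apply/eqP.
      by exists x; apply: F1.
    + exact: F2.
    + exact: F1.
  move=> [x [x0 Hx0 HR]].
  have [xl [HRL _]] := G_dec HR.
  have Hxl := F2 _ _ Hx0 HRL.
  have [_ [_ _ Hb _]] := G_obs_inv HRL.
  rewrite -Hc inE in Hb; case Hxb: (xi z1 b) Hb => [z1'|//] _.
  exists (NX b (UR (DeltaH (Some z1)) q)),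
         (NXt a (URt (DeltaH (Some z1)) qt)), z1'.
  case: eqP => [E|_]; last by [].
  by rewrite E inE in Hxl.
- have Eg : gA B (rcons be a) = gA B be by rewrite gA_rcons HB /= cats0.
  rewrite /Inv Eg.
  have F1 : forall x, x \in UR (DeltaH (Some z1)) q -> inEC S (gA B be) x.
    move=> x /in_UR [x'' [Hx'' Hcn]].
    have [x0 Hx0 HR] := Hsub2 _ Hx''.
    rewrite Hc in Hcn; exists x0 => //; exact: G_ext HR Hcn.
  have F2 : forall x0 x, x0 \in X0 -> ReachL S (gA B be) x0 x ->
      x \in UR (DeltaH (Some z1)) q.
    move=> x0 x Hx0 HRL; apply/in_UR; exists x; split; last exact: connect0.
    exact: Hsub1 HRL.
  split.
    split; first exact: HN.
    move=> z1'; case: eqP => // _ [<-]; split => //.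
  move=> [x [x0 Hx0 HR]].
  have [xl [HRL Hcn]] := G_dec HR.
  have Hx : x \in UR (DeltaH (Some z1)) q.
    apply/in_UR; exists xl; split; first exact: Hsub1 HRL.
    by rewrite Hc.
  exists (UR (DeltaH (Some z1)) q), (NXt a (URt (DeltaH (Some z1)) qt)), z1.
  case: eqP => [E|_]; last by [].
  by rewrite E inE in Hx.
Qed.


Lemma inv_base B x00 : x00 \in X0 -> Inv B [::] (q0 D).
Proof.
move=> Hx00; split.
  move=> x0 x; split.
    move/imsetP => [y Hy [-> ->]]; split => //; exact: ReachL_nil'.
  move=> [Hx0 /ReachL_nil ->]; exact: imset_f.
move=> z1 [<-]; split => //.
- exists x00, x00 => //; exists [::]; split => //; exact: LT_nil.
- by move=> x0 x Hx0 /ReachL_nil ->.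
- move=> x Hx; exists x => //; exists [::]; split => //; exact: LT_nil.
Qed.

Lemma fM_obs st a sa : @fM D st (EObs a) = Some sa ->
  exists q qt z1, [/\ st = Env q qt (Some z1), sa = Att q qt (Some z1) a &
                      a \in Ot qt (DeltaH (Some z1))].
Proof.
case: st => [q qt z|//] /=; case: ifP => // HO [<-].
case: z HO => [z1|] HO; first by exists q, qt, z1.
by move: HO; rewrite inE /= in_set0 andbF.
Qed.

Lemma inv_run B hs st x00 : x00 \in X0 -> ext_run (@fM D) (q0 D) hs st ->
  consistent B hs -> Inv B (map fst hs) st.
Proof.
move=> Hx00; elim/last_ind: hs st => [|hs [a h] IH] st.
  move=> H; inversion H; subst => _; exact: inv_base Hx00.
move/ext_run_rcons => [st2 [sa [H1 H2 H3]]] /consistent_rcons [Hc1 Hc2].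
have HI := IH _ H1 Hc1.
have [q [qt [z1 [E1 E2 HO]]]] := fM_obs H2; subst st2 sa.
rewrite map_rcons; exact: (inv_step HI HO Hc2 H3).1.
Qed.


Lemma pref_reach T be a r : inPLTG T (be ++ a :: r) ->
  exists x0 x, [/\ x0 \in X0, Reach T be x0 x, isSome (delta x a),
                   a \in T be & a \in So].
Proof.
move=> [s [x0 Hx0 Hs] HP].
have [s1 [s2 [Es H1 H2]]] := P_split HP; subst s.
have [s21 [s22 [Es2 H21 H22]]] := P_split (r := r) (be := [:: a]) H2; subst s2.
have [t [u [Et Ht Hu]]] := decomp s21; subst s21.
have HPt : P t = [:: a] by rewrite -H21 P_cat (P_unobs Hu) cats0.
have [t' [Et' HPt' Ha]] := lastobs_rcons (be := [::]) Ht HPt; subst t.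
have Hs' : inLT T x0 (rcons (s1 ++ t') a).
  apply: (inLT_prefix (t := u ++ s22)).
  have -> : rcons (s1 ++ t') a ++ (u ++ s22) = s1 ++ (rcons t' a ++ u) ++ s22.
    by rewrite rcons_cat -!catA.
  exact: Hs.
have [Hi1 Hi2 Hi3] := inLT_inv Hs'.
have := inLT_def Hi1; case Hx: (deltas x0 (s1 ++ t')) => [x|//] _.
have HP1 : P (s1 ++ t') = be by rewrite P_cat H1 HPt' cats0.
exists x0, x; split => //; first by exists (s1 ++ t').
  by rewrite deltas_rcons Hx in Hi2.
by rewrite -HP1.
Qed.

Lemma inPLTG_inPLG T be r : inPLTG T (be ++ r) -> @inPLG D be.
Proof.
move=> [s [x0 Hx0 Hs] HP].
have [s1 [s2 [Es H1 H2]]] := P_split HP; subst s.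
exists s1 => //; exists x0 => //; exact: inLT_def (inLT_prefix Hs).
Qed.

Lemma inEC_prefix g1 g2 x : inEC S (g1 ++ g2) x -> exists x', @inEC D S g1 x'.
Proof.
move=> [x0 Hx0 [s [H1 H2 H3]]].
have [s1 [s2 [Es Hs1 Hs2]]] := P_split H2; subst s.
have Hi := inLT_prefix H1; have := inLT_def Hi.
case Hx: (deltas x0 s1) => [x'|//] _.
by exists x', x0 => //; exists s1.
Qed.

Lemma no_negdet B be r q qt z : Inv B be (Env q qt z) ->
  inPLTG (SA B) (be ++ r) ->
  (forall x0, inEI (SA B) (be ++ r) x0 -> x0 \in Xsec) -> ~~ neg_det qt.
Proof.
move=> [HI _] [s [x0 Hx0 Hs] HP] Hdet.
have Hsec : x0 \in Xsec by apply: Hdet; split => //; exists s.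
have [s1 [s2 [Es H1 H2]]] := P_split HP; subst s.
have Hi := inLT_prefix Hs.
have [t [u [Et Ht Hu]]] := decomp s1; subst s1.
have Hit := inLT_prefix Hi; have := inLT_def Hit.
case Hx: (deltas x0 t) => [x|//] _.
have HPt : P t = be by rewrite -H1 P_cat (P_unobs Hu) cats0.
have Hq : (x0, x) \in qt by apply/HI; split => //; exists t.
have HIq : x0 \in I qt by rewrite inE; apply/existsP; exists x.
by apply/negP => /disjointFr /(_ HIq); rewrite Hsec.
Qed.

Lemma no_undet B be r q qt z1 : Inv B be (Env q qt (Some z1)) ->
  inPLTG (SA B) (be ++ r) ->
  (forall x0, inEI (SA B) (be ++ r) x0 -> x0 \in Xsec) ->
  ~~ undetectable qt (Some z1).
Proof.
move=> HI [s [x0 Hx0 Hs] HP] Hdet.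
have Hsec : x0 \in Xsec by apply: Hdet; split => //; exists s.
have [s1 [s2 [Es H1 H2]]] := P_split HP; subst s.
have Hi := inLT_prefix Hs; have := inLT_def Hi.
case Hx: (deltas x0 s1) => [x|//] _.
have Hin : (x0, x) \in URt (DeltaH (Some z1)) qt.
  by apply/(URt_char _ _ HI); split => //; exists s1.
apply/negP => /andP [_ /forallP /(_ (x0, x))].
rewrite Hin /= Hsec /= => /existsP [x0' /andP [Hin' Hns]].
have [Hx0' [s' [Hs'1 Hs'2 Hs'3]]] := (URt_char _ _ HI).1 Hin'.
have Hsp : inLT (SA B) x0' (s' ++ s2).
  apply: splice Hs Hs'1 _ _; by rewrite ?Hs'2 ?H1 ?Hs'3 ?Hx.
have : x0' \in Xsec.
  apply: Hdet; split => //; exists (s' ++ s2) => //; by rewrite P_cat Hs'2 H2.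
by rewrite (negbTE Hns).
Qed.

Lemma Reach_nil_transfer T T' x0 x : Reach T [::] x0 x -> T [::] = T' [::] ->
  Reach T' [::] x0 x.
Proof.
move=> /G_dec [xl [/ReachL_nil -> Hc]] E; rewrite E in Hc.
exact: G_ext (ReachL_Reach (ReachL_nil' T' x0)) Hc.
Qed.


Definition hat_of (o : option Sigma) : hatev D :=
  match o with Some b => HSym b | None => HEps D end.

Lemma hat_ofK o : hat_to_opt (hat_of o) = o.
Proof. by case: o. Qed.

Lemma att_Vset A be a : is_attacker A -> inPLG (rcons be a) ->
  Vset a (hat_of (A (rcons be a))).
Proof.
move=> [_ HA] Hin; have [H1 H2] := HA _ _ Hin.
case Ha: (a \in Sv).
  by move: (H2 Ha); case: (A (rcons be a)) => [b|] //= Hb; rewrite Ha.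
by rewrite H1 ?Ha //= Ha eqxx.
Qed.

Lemma step_helper A hs be q qt z1 a r :
  is_attacker A ->
  ext_run (@fMs D) (q0 D) hs (Env q qt (Some z1)) ->
  ~~ stopped (Env q qt (Some z1)) -> map fst hs = be -> consistent A hs ->
  inPLTG (SA A) (be ++ a :: r) ->
  exists h st', [/\ ext_run (@fMs D) (q0 D) (rcons hs (a, h)) st',
     consistent A (rcons hs (a, h)), Inv A (rcons be a) st' &
     ((exists x, inEC S (gA A (rcons be a)) x) ->
        exists q' qt' z1', st' = Env q' qt' (Some z1'))].
Proof.
move=> Hatt Hrun Hns Hbe Hcon Hpl.
have [x00 [x [Hx00 _ _ _ _]]] := pref_reach Hpl.
have HI : Inv A be (Env q qt (Some z1)).
  rewrite -Hbe; apply: inv_run Hx00 _ Hcon; exact: ext_run_sub fMs_fM Hrun.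
have [x0 [x' [Hx0 HR Hd Ha1 Ha2]]] := pref_reach Hpl.
have HOt : a \in Ot qt (DeltaH (Some z1)).
  by apply/(Ot_char a HI); split => //; exists x0, x'.
have Hin : inPLG (rcons be a).
  by apply: (inPLTG_inPLG (T := SA A) (r := r)); rewrite cat_rcons.
have HV := att_Vset Hatt Hin.
set h := hat_of (A (rcons be a)).
have HB : A (rcons be a) = hat_to_opt h by rewrite hat_ofK.
case Hf: (fM (Att q qt (Some z1) a) (EHat h)) => [st'|]; last first.
  by move: Hf; rewrite /= HV.
have [HI' Hst] := inv_step HI HOt HB Hf.
exists h, st'; split => //.
- apply/ext_run_rcons; exists (Env q qt (Some z1)), (Att q qt (Some z1) a).
  split => //; first by rewrite /fMs (negbTE Hns) /= HOt.
- by apply/consistent_rcons; rewrite Hbe.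
Qed.

Definition reached_pos := exists hs q qt z,
  ext_run (@fMs D) (q0 D) hs (Env q qt z) /\ pos_det qt.

Lemma fwd A al sg : is_attacker A -> inPLTG (SA A) (rcons al sg) ->
  stealthy A al -> (forall x0, inEI (SA A) (rcons al sg) x0 -> x0 \in Xsec) ->
  reached_pos.
Proof.
move=> Hatt Hpl Hst Hdet.
have Hpl0 : inPLTG (SA A) (al ++ [:: sg]) by rewrite cats1.
have [x00 [_ [Hx00 _ _ _ _]]] := pref_reach Hpl0.
have Hstop : forall be r q qt z1, al = be ++ r -> Inv A be (Env q qt (Some z1)) ->
    stopped (Env q qt (Some z1)) -> pos_det qt.
  move=> be r q qt z1 Er HI /=; case/or3P => // Hs.
    have Hpl' : inPLTG (SA A) (be ++ rcons r sg) by rewrite -rcons_cat -Er.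
    have Hd' : forall x0, inEI (SA A) (be ++ rcons r sg) x0 -> x0 \in Xsec.
      by rewrite -rcons_cat -Er.
    by have := no_negdet HI Hpl' Hd'; rewrite Hs.
  have Hpl' : inPLTG (SA A) (be ++ rcons r sg) by rewrite -rcons_cat -Er.
  have Hd' : forall x0, inEI (SA A) (be ++ rcons r sg) x0 -> x0 \in Xsec.
    by rewrite -rcons_cat -Er.
  by have := no_undet HI Hpl' Hd'; rewrite Hs.
have Main : forall be r, al = be ++ r -> reached_pos \/
    exists hs q qt z1, [/\ ext_run (@fMs D) (q0 D) hs (Env q qt (Some z1)),
      ~~ stopped (Env q qt (Some z1)), map fst hs = be & consistent A hs].
  elim/last_ind => [|be a IH] r Er.
    have HI := inv_base A Hx00.
    case Hs: (stopped (q0 D)).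
      left; exists [::], X0, [set (x, x) | x in X0], (Some z0); split.
        constructor.
      exact: Hstop Er HI Hs.
    right; exists [::], X0, [set (x, x) | x in X0], z0; split => //.
    - constructor.
    - by rewrite /q0 in Hs; rewrite Hs.
    - by move=> [|? ?] ? ? ?.
  have Er' : al = be ++ a :: r by rewrite Er cat_rcons.
  case: (IH _ Er') => [|[hs [q [qt [z1 [Hrun Hns Hbe Hcon]]]]]]; first by left.
  have Hpl' : inPLTG (SA A) (be ++ a :: rcons r sg).
    by rewrite -rcons_cons -rcons_cat -Er'.
  have [h [st' [Hrun' Hcon' HI' Hst']]] := step_helper Hatt Hrun Hns Hbe Hcon Hpl'.
  have [q' [qt' [z1' Est]]] : exists q' qt' z1', st' = Env q' qt' (Some z1').
    apply: Hst'; move: Hst; rewrite /stealthy Er.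
    move=> [x Hx]; have [w Hw] := gA_prefix A (rcons be a) r.
    by rewrite Hw in Hx; apply: inEC_prefix Hx.
  subst st'.
  case Hs: (stopped (Env q' qt' (Some z1'))).
    left; exists (rcons hs (a, h)), q', qt', (Some z1'); split.
      exact: Hrun'.
    exact: Hstop Er HI' Hs.
  right; exists (rcons hs (a, h)), q', qt', z1'; split.
  - exact: Hrun'.
  - by rewrite Hs.
  - by rewrite map_rcons Hbe.
  - exact: Hcon'.
case: (Main al [::] (esym (cats0 al))) => // [[hs [q [qt [z1 [Hrun Hns Hbe Hcon]]]]]].
have [h [st' [Hrun' Hcon' HI' _]]] :=
  step_helper Hatt Hrun Hns Hbe Hcon Hpl0.
case: st' Hrun' HI' => // q' qt' z' Hrun' [HI1 _].
exists (rcons hs (sg, h)), q', qt', z'; split; first exact: Hrun'.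
apply/subsetP => x0; rewrite inE => /existsP [x /HI1 [Hx0 [s [H1 H2 H3 _]]]].
by apply: Hdet; split => //; exists s.
Qed.


Definition onpath (hs : seq (Sigma * hatev D)) sa h := exists hs1 a hs2 st1 st2,
  [/\ hs = hs1 ++ (a, h) :: hs2, ext_run (@fMs D) (q0 D) hs1 st1,
      fMs st1 (EObs a) = Some sa & fMs sa (EHat h) = Some st2].

Definition good hs := forall sa h h', onpath hs sa h -> onpath hs sa h' -> h = h'.

Lemma cut_path hs st hs1 a h hs2 st1 sa hs1' a' h' hs2' st1' st2' :
  hs = hs1 ++ (a, h) :: hs2 -> hs = hs1' ++ (a', h') :: hs2' ->
  ext_run (@fMs D) (q0 D) hs1 st1 -> fMs st1 (EObs a) = Some sa ->
  ext_run (@fMs D) (q0 D) hs1' st1' -> fMs st1' (EObs a') = Some sa ->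
  fMs sa (EHat h') = Some st2' ->
  ext_run (@fMs D) (q0 D) hs st ->
  ext_run (@fMs D) (q0 D) (hs1 ++ (a, h') :: hs2') st.
Proof.
move=> E1 E2 R1 O1 R1' O1' H2' R.
rewrite E2 in R; have [m [Rm Rr]] := (ext_run_cat _ _ _ _ _).1 R.
have Em := ext_run_det Rm R1'; subst m.
inversion Rr as [|? sa0 st20 ? ? ? ? E3 E4 R3]; subst.
have Es : sa0 = sa by congruence.
subst sa0; have Es2 : st20 = st2' by congruence.
subst st20.
apply/ext_run_cat; exists st1; split => //; econstructor; eauto.
Qed.

Lemma exists_good n hs st : size hs <= n -> ext_run (@fMs D) (q0 D) hs st ->
  exists hs', ext_run (@fMs D) (q0 D) hs' st /\ good hs'.
Proof.
elim: n hs => [|n IH] hs.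
  rewrite leqn0 => /nilP -> R; exists [::]; split => //.
  by move=> sa h h' [hs1 [a [hs2 [? [? [E _ _ _]]]]]]; case: hs1 E.
move=> Hsz R.
have [Hg|Hng] := classic (good hs); first by exists hs.
have [sa [h [h' [P1 P2 Hne]]]] : exists sa h h', [/\ onpath hs sa h, onpath hs sa h' & h <> h'].
  apply: NNPP => Hn; apply: Hng => sa h h' H1 H2; apply: NNPP => Hne.
  by apply: Hn; exists sa, h, h'.
move: P1 P2 => [hs1 [a [hs2 [st1 [st2 [E1 R1 O1 H1]]]]]]
               [hs1' [a' [hs2' [st1' [st2' [E2 R1' O1' H2]]]]]].
have Hsize : size hs = size hs1 + (size hs2).+1 by rewrite E1 size_cat.
have Hsize' : size hs = size hs1' + (size hs2').+1 by rewrite E2 size_cat.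
case: (ltngtP (size hs1) (size hs1')) => Hc.
- apply: (IH (hs1 ++ (a, h') :: hs2')); last exact: cut_path E1 E2 R1 O1 R1' O1' H2 R.
  rewrite size_cat /=; lia.
- apply: (IH (hs1' ++ (a', h) :: hs2)); last exact: cut_path E2 E1 R1' O1' R1 O1 H1 R.
  rewrite size_cat /=; lia.
- exfalso; apply: Hne.
  have := congr1 (fun s => nth (a, h) s (size hs1)) (etrans (esym E1) E2).
  by rewrite /= !nth_cat Hc ltnn subnn /= => [[]].
Qed.


Definition ch (p : seq (Sigma * hatev D)) (sa : aas_state D) : hatev D :=
  match excluded_middle_informative (exists h, onpath p sa h) with
  | left H => proj1_sig (constructive_indefinite_description _ H)
  | right _ => match sa with Att _ _ _ a => HSym a | Env _ _ _ => HEps D end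
  end.

Definition fmp p (st : aas_state D) (e : evM D) : option (aas_state D) :=
  match st with
  | Env _ _ _ => fMs st e
  | Att _ _ _ _ => match e with
      | EHat h => if excluded_middle_informative (h = ch p st) then fMs st e else None
      | EObs _ => None end
  end.

Lemma ch_spec p sa h : good p -> onpath p sa h -> ch p sa = h.
Proof.
move=> Hg Ho; rewrite /ch; case: excluded_middle_informative => [H|[]]; last by exists h.
case: (constructive_indefinite_description _ H) => h' Ho' /=; exact: Hg Ho' Ho.
Qed.

Lemma Vset_fM q qt z a h st : @fM D (Att q qt z a) (EHat h) = Some st -> Vset a h.
Proof. by rewrite /=; case: ifP. Qed.

Lemma fMs_Att q qt z a e : @fMs D (Att q qt z a) e = fM (Att q qt z a) e.
Proof. by []. Qed.

Lemma ch_valid p q qt z a : Vset a (ch p (Att q qt z a)).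
Proof.
rewrite /ch; case: excluded_middle_informative => [H|_].
  case: (constructive_indefinite_description _ H) => h [? [? [? [? [? [_ _ _ Hf]]]]]] /=.
  exact: Vset_fM Hf.
by rewrite /=; case: ifP.
Qed.

Lemma fmp_sub p st e st' : fmp p st e = Some st' -> fMs st e = Some st'.
Proof.
case: st => //= q qt z a; case: e => // h.
by case: excluded_middle_informative.
Qed.

Lemma fmp_hat p sa h st : fmp p sa (EHat h) = Some st -> h = ch p sa.
Proof.
case: sa => //= [q qt z|q qt z a]; first by rewrite /fMs; case: ifP.
by case: excluded_middle_informative.
Qed.

Lemma fmp_SAS p : is_SAS (fmp p).
Proof.
move=> st _; split; first exact: fmp_sub.
case: st => [q qt z|q qt z a] //.
exists (EHat (ch p (Att q qt z a))); split.
  rewrite /fmp; destruct (excluded_middle_informative _) as [E1|E]; last by exfalso; apply: E.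
  by rewrite fMs_Att /= ch_valid.
case=> [b|h] //; rewrite /fmp; destruct (excluded_middle_informative _) as [E|E] => // _; by rewrite E.
Qed.

Lemma fmp_det p st hs1 hs2 s1 s2 : ext_run (fmp p) st hs1 s1 ->
  ext_run (fmp p) st hs2 s2 -> map fst hs1 = map fst hs2 -> hs1 = hs2.
Proof.
elim: hs1 st hs2 => [|[a h] hs1 IH] st [|[a' h'] hs2] //= R1 R2 [Ea Em].
subst a'.
inversion R1 as [|? sa ? ? ? ? ? E1 E2 R]; subst.
inversion R2 as [|? sa' ? ? ? ? ? E1' E2' R']; subst.
have Es : sa = sa' by congruence.
subst sa'.
have Eh := fmp_hat E2; have Eh' := fmp_hat E2'; subst h h'.
have Est : st2 = st1 by congruence.
subst st1; by rewrite (IH _ _ R R' Em).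
Qed.

Lemma path_run p st : good p -> ext_run (@fMs D) (q0 D) p st ->
  ext_run (fmp p) (q0 D) p st.
Proof.
move=> Hg Hr.
suff: forall suf pre stm, p = pre ++ suf -> ext_run (@fMs D) (q0 D) pre stm ->
    ext_run (@fMs D) stm suf st -> ext_run (fmp p) stm suf st.
  by move/(_ p [::] (q0 D) erefl (er_nil _ _)); apply.
elim=> [|[a h] suf IH] pre stm Ep Rpre Rsuf.
  by inversion Rsuf; constructor.
inversion Rsuf as [|? sa st2 ? ? ? ? E1 E2 R]; subst.
have Ho : onpath (pre ++ (a, h) :: suf) sa h by exists pre, a, suf, stm, st2.
apply: (er_cons (sa := sa) (st2 := st2)).
- move: E1; case: stm Rsuf Rpre => [q qt z|q qt z a'] _ _ E1; first exact: E1.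
  by rewrite fMs_Att in E1.
- move: E2 Ho; case: sa E1 Rsuf => [q qt z|q qt z a'] _ _ E2 Ho.
    by move: E2; rewrite /fMs /=; case: ifP.
  rewrite /fmp; destruct (excluded_middle_informative _) as [E3|E3]; first exact: E2.
  by exfalso; apply: E3; rewrite (ch_spec Hg Ho).
- apply: (IH (rcons pre (a, h))) => //.
    by rewrite -cats1 -catA.
  by apply/ext_run_rcons; exists stm, sa; split.
Qed.


Definition Am (fm : aas_state D -> evM D -> option (aas_state D)) (obs : seq Sigma)
  : option Sigma :=
  match obs with
  | [::] => None
  | b :: obs' =>
    match excluded_middle_informative
      (exists hs, (exists st, ext_run fm (q0 D) hs st) /\ map fst hs = obs) with
    | left H => hat_to_opt (last (b, HEps D)
                  (proj1_sig (constructive_indefinite_description _ H))).2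
    | right _ => Some (last b obs')
    end
  end.

Lemma Am_run p hs a h st : ext_run (fmp p) (q0 D) (rcons hs (a, h)) st ->
  Am (fmp p) (rcons (map fst hs) a) = hat_to_opt h.
Proof.
move=> R; rewrite /Am.
case E: (rcons (map fst hs) a) => [|b obs']; first by have := congr1 size E; rewrite size_rcons.
destruct (excluded_middle_informative _) as [H|H]; last first.
  by exfalso; apply: H; exists (rcons hs (a, h)); split; [exists st | rewrite map_rcons].
case: (constructive_indefinite_description _ H) => hs0 [[st0 R0] E0] /=.
have Eh : hs0 = rcons hs (a, h).
  by apply: fmp_det R0 R _; rewrite E0 -E map_rcons.
by rewrite Eh last_rcons.
Qed.

Lemma Am_norun fm al a :
  (forall hs st, ext_run fm (q0 D) hs st -> map fst hs <> rcons al a) ->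
  Am fm (rcons al a) = Some a.
Proof.
move=> Hn; rewrite /Am.
case E: (rcons al a) => [|b obs']; first by have := congr1 size E; rewrite size_rcons.
destruct (excluded_middle_informative _) as [H|H].
  by exfalso; case: H => hs [[st R] Em]; apply: (Hn hs st R); rewrite Em.
by rewrite -[last b obs']/(last a (b :: obs')) -E last_rcons.
Qed.

Lemma run_rcons_split fm hs st al a :
  @ext_run D fm (q0 D) hs st -> map fst hs = rcons al a ->
  exists hs' h, hs = rcons hs' (a, h) /\ map fst hs' = al.
Proof.
case/lastP: hs => [|hs' [a' h]] _; first by case: al.
rewrite map_rcons => /rcons_inj [E1 E2]; subst a'.
by exists hs', h.
Qed.

Lemma last_hat_Vset p hs a h st : ext_run (fmp p) (q0 D) (rcons hs (a, h)) st ->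
  Vset a h.
Proof.
move/ext_run_rcons => [st2 [sa [_ O H]]].
have [q [qt [z1 [_ Esa _]]]] := fM_obs (fMs_fM (fmp_sub O)); subst sa.
exact: Vset_fM (fMs_fM (fmp_sub H)).
Qed.

Lemma Am_induced p : induced_strategy (fmp p) (Am (fmp p)).
Proof.
split => // al a _; split.
  move=> hs st R Em.
  have [hs' [h [Eh Em']]] := run_rcons_split R Em; subst hs al.
  by rewrite (Am_run R) last_rcons.
exact: Am_norun.
Qed.

Lemma Am_attacker p : is_attacker (Am (fmp p)).
Proof.
split => // al a _.
have [[hs [st [R Em]]]|Hn] := classic (exists hs st,
    ext_run (fmp p) (q0 D) hs st /\ map fst hs = rcons al a).
  have [hs' [h [Eh Em']]] := run_rcons_split R Em; subst hs al.
  rewrite (Am_run R); have := last_hat_Vset R.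
  case: h Em {R} => [b|] _ /=.
    case: (a \in Sv) => /= HV; split => // _; try exact: HV; by rewrite (eqP HV).
  by move=> Ha; split => //; rewrite Ha.
rewrite Am_norun; last by move=> hs st R Em; apply: Hn; exists hs, st.
by split => //= ->.
Qed.


Lemma consistent_path p st : ext_run (fmp p) (q0 D) p st -> consistent (Am (fmp p)) p.
Proof.
move=> R hs1 a h hs2 E.
have R' : ext_run (fmp p) (q0 D) (rcons hs1 (a, h) ++ hs2) st by rewrite cat_rcons -E.
have [m [Rm _]] := (ext_run_cat _ _ _ _ _).1 R'.
exact: Am_run Rm.
Qed.

Lemma Am_detect p q qt z x00 : x00 \in X0 -> good p ->
  ext_run (@fMs D) (q0 D) p (Env q qt z) -> pos_det qt -> p <> [::] ->
  IS_detectable (Am (fmp p)).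
Proof.
move=> Hx00 Hg R Hpos.
case/lastP: p Hg R => [//|hs [a h]] Hg R _.
set B := Am (fmp (rcons hs (a, h))).
have Rf := path_run Hg R.
have Hcon := consistent_path Rf.
have RM : ext_run (@fM D) (q0 D) (rcons hs (a, h)) (Env q qt z).
  exact: ext_run_sub fMs_fM R.
have HIfin := inv_run Hx00 RM Hcon.
rewrite map_rcons in HIfin.
move/ext_run_rcons: RM => [st2 [sa [R2 O H]]].
have [q2 [qt2 [z1 [E2 Esa HOt]]]] := fM_obs O; subst st2 sa.
have [Hcon' _] := (consistent_rcons _ _ _ _).1 Hcon.
have HI := inv_run Hx00 R2 Hcon'.
have [Ha1 Ha2 [x0 [x [Hx0 HR Hd]]]] := (Ot_char a HI).1 HOt.
exists (map fst hs), a; split => //.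
- case Hy: (delta x a) Hd => [y|//] _.
  have [s [H1 H2 H3 _]] := G_obs HR Ha1 Ha2 Hy.
  by exists s => //; exists x0.
- by have [_ Hst _ _] := HI.2 z1 erefl.
- move=> x0' [Hx0' [s Hs HP]].
  have [t [u [Et Ht Hu]]] := decomp s; subst s.
  have Hit := inLT_prefix Hs; have := inLT_def Hit.
  case Hx: (deltas x0' t) => [xx|//] _.
  have HPt : P t = rcons (map fst hs) a by rewrite -HP P_cat (P_unobs Hu) cats0.
  have Hin : (x0', xx) \in qt by apply/(HIfin.1 x0' xx); split => //; exists t.
  apply: (subsetP Hpos); rewrite inE; apply/existsP; by exists xx.
Qed.

Lemma q0_detect (B A : seq Sigma -> option Sigma) al sg : inPLTG (SA A) (rcons al sg) ->
  pos_det [set (x, x) | x in X0] -> IS_detectable B.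
Proof.
move=> Hpl Hpos.
have [c [r Er]] : exists c r, rcons al sg = [::] ++ c :: r.
  by case: al {Hpl} => [|c al]; [exists sg, [::] | exists c, (rcons al sg)].
rewrite Er in Hpl.
have [x0 [x [Hx0 HR Hd Hc Hc']]] := pref_reach Hpl.
have HR' : Reach (SA B) [::] x0 x by apply: Reach_nil_transfer HR _.
have Hc2 : c \in SA B [::] by [].
case Hy: (delta x c) Hd => [y|//] _.
have [s [H1 H2 H3 _]] := G_obs HR' Hc' Hc2 Hy.
exists [::], c; split => //.
- by exists s => //; exists x0.
- exists x0, x0 => //; exists [::]; split => //; exact: LT_nil.
- move=> x0' [Hx0' _]; apply: (subsetP Hpos); rewrite inE; apply/existsP.
  by exists x0'; apply: imset_f.
Qed.

End Proof.

Theorem theorem2 (D : setup) (Hwf : wf_setup D) :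
  (exists A, @is_attacker D A /\ @IS_detectable D A) <->
  (exists fm, @is_SAS D fm /\
     exists A, [/\ @induced_strategy D fm A, @is_attacker D A & @IS_detectable D A]).
Proof.
split; last first.
  by move=> [fm [_ [A [_ H1 H2]]]]; exists A.
move=> [A [Hatt [al [sg [Hsg Hpl Hst Hdet]]]]].
have [hs [q [qt [z [R Hpos]]]]] := fwd Hwf Hatt Hpl Hst Hdet.
have [p [Rp Hg]] := exists_good (n := size hs) (leqnn _) R.
exists (fmp p); split; first exact: fmp_SAS.
exists (Am (fmp p)); split; [exact: Am_induced | exact: Am_attacker |].
have [x00 [_ [Hx00 _ _ _ _]]] := pref_reach (be := al) (a := sg) (r := [::])
  (eq_ind _ (fun l => inPLTG (SA A) l) Hpl _ (esym (cats1 al sg))).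
case: p Rp Hg => [|c p'] Rp Hg.
  inversion Rp; subst.
  exact: (q0_detect (Am (fmp [::])) Hpl Hpos).
by apply: (Am_detect Hwf Hx00 Hg Rp Hpos).
Qed.
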